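(* For each $n \in \{97, 193, 289\}$, there exists a Shrikhande-graph-design of order $n$. That is, for each such $n$, the edge set of the complete graph $K_n$ can be partitioned into $n(n-1)/96$ subgraphs, each isomorphic to the Shrikhande graph.
   Context: The Shrikhande graph is the Cayley graph on the group $\mathbb{Z}_4 \times \mathbb{Z}_4$ with connection set $\{\pm(1,0), \pm(0,1), \pm(1,1)\}$. It is a 6-regular graph on 16 vertices with 48 edges. *)

(* Defs.v *)
From mathcomp Require Import all_boot all_algebra.
Set Implicit Arguments. Unset Strict Implicit. Unset Printing Implicit Defensive.
Import GRing.Theory.
Local Open Scope ring_scope.

Definition shrV : finType := ('Z_4 * 'Z_4)%type.

Definition shr_conn (d : 'Z_4 * 'Z_4) : bool :=
  (d == (1, 0)) || (d == (-1, 0)) || (d == (0, 1)) || (d == (0, -1))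
  || (d == (1, 1)) || (d == (-1, -1)).

(* Cayley graph adjacency: u ~ v iff v - u lies in the connection set. *)
Definition shrikhande : rel shrV :=
  fun u v => shr_conn (v.1 - u.1, v.2 - u.2).

Definition copy_edge (n : nat) (f : shrV -> 'I_n) : rel 'I_n :=
  fun x y => [exists u, exists v, [&& shrikhande u v, f u == x & f v == y]].

(* A Shrikhande-graph-design of order n: a family of n(n-1)/96 subgraphs of
   K_n, each the image of an injective embedding of the Shrikhande graph
   (hence isomorphic to it), such that every edge of K_n lies in exactly
   one of them. *)
Definition shrikhande_design (n : nat) : Prop :=
  exists f : 'I_((n * (n - 1)) %/ 96) -> shrV -> 'I_n,
    (forall i, injective (f i)) /\
    (forall x y : 'I_n, x != y -> exists! i, copy_edge (f i) x y).

(* Main.v *)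
Require Import Defs.
From HB Require Import structures.
From mathcomp Require Import all_boot all_algebra.
Set Implicit Arguments. Unset Strict Implicit. Unset Printing Implicit Defensive.
Import GRing.Theory.
Local Open Scope ring_scope.

Definition cedge (V : finType) (F : shrV -> V) (x y : V) : bool :=
  [exists u, exists v, [&& shrikhande u v, F u == x & F v == y]].

Lemma transport (n N : nat) (V I : finType) (F : I -> shrV -> V) :
  #|V| = n -> #|I| = N -> (forall i, injective (F i)) ->
  (forall x y : V, x != y -> exists! i, cedge (F i) x y) ->
  exists f : 'I_N -> shrV -> 'I_n,
    (forall i, injective (f i)) /\
    (forall x y : 'I_n, x != y -> exists! i, copy_edge (f i) x y).
Proof.
move=> hV hI Finj Fd.
pose h (i : 'I_N) : I := enum_val (cast_ord (esym hI) i).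
pose hinv (i : I) : 'I_N := cast_ord hI (enum_rank i).
have hK : cancel h hinv by move=> i; rewrite /h /hinv enum_valK cast_ordKV.
have hK' : cancel hinv h by move=> i; rewrite /h /hinv cast_ordK enum_rankK.
pose e (v : V) : 'I_n := cast_ord hV (enum_rank v).
pose einv (x : 'I_n) : V := enum_val (cast_ord (esym hV) x).
have eK : cancel e einv by move=> v; rewrite /e /einv cast_ordK enum_rankK.
have eK' : cancel einv e by move=> x; rewrite /e /einv enum_valK cast_ordKV.
exists (fun i u => e (F (h i) u)); split.
  by move=> i u v /(can_inj eK) /Finj.
have key : forall i x y, copy_edge (fun u => e (F (h i) u)) x y = cedge (F (h i)) (einv x) (einv y).
  move=> i x y; apply/existsP/existsP => -[u /existsP [v /and3P [H1 /eqP H2 /eqP H3]]];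
    exists u; apply/existsP; exists v; apply/and3P; split => //; apply/eqP.
  - by rewrite -H2 eK.
  - by rewrite -H3 eK.
  - by rewrite H2 eK'.
  - by rewrite H3 eK'.
move=> x y xy.
have : einv x != einv y by apply: contra xy => /eqP /(can_inj eK') ->.
move=> /Fd [i [Hi Hu]].
exists (hinv i); split; first by rewrite key hK'.
by move=> i' H'; rewrite -(hK i'); congr hinv; apply: Hu; rewrite -key.
Qed.

Lemma diff_design (G : finZmodType) k (g : 'I_k -> shrV -> G) :
  (forall j, injective (g j)) ->
  (forall d : G, d != 0 -> exists! p : 'I_k * shrV * shrV,
      shrikhande p.1.2 p.2 && (g p.1.1 p.2 - g p.1.1 p.1.2 == d)) ->
  forall x y : G, x != y ->
    exists! i : 'I_k * G, cedge (fun u => g i.1 u + i.2) x y.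
Proof.
move=> ginj gd x y xy.
have : y - x != 0 by rewrite subr_eq0 eq_sym.
case/gd => -[[j u] v] /= [/andP [huv /eqP hd] Hu].
exists (j, x - g j u); split.
  apply/existsP; exists u; apply/existsP; exists v; rewrite huv /=.
  rewrite addrC subrK eqxx /=.
  by rewrite addrCA -[g j v - g j u]/(g j v - g j u) hd addrCA subrr addr0.
move=> [j' t] /existsP [u' /existsP [v' /and3P [huv' /eqP hx /eqP hy]]] /=.
have := Hu (j', u', v') => /=.
move: hx hy => /= hx hy.
rewrite huv' /= -hx -hy opprD addrACA subrr addr0 eqxx => /(_ isT) [-> ->].
by rewrite addrC addKr.
Qed.

Lemma uniq_map_in (T1 T2 : eqType) (f : T1 -> T2) s :
  uniq (map f s) -> {in s &, injective f}.
Proof.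
elim: s => //= a s IH /andP [ha hs] x y; rewrite !inE.
move=> /orP [/eqP -> | hx] /orP [/eqP -> | hy] e //.
- by move: ha; rewrite e map_f.
- by move: ha; rewrite -e map_f.
- exact: IH.
Qed.

Definition mkord n (i : nat) : 'I_n.+1 := Ordinal (ltn_pmod i (ltn0Sn n)).
Definition ordl n : seq 'I_n.+1 := [seq mkord n i | i <- iota 0 n.+1].
Lemma ordlP n (x : 'I_n.+1) : x \in ordl n.
Proof.
have -> : x = mkord n x by apply: val_inj; rewrite /= modn_small.
by apply: map_f; rewrite mem_iota /=.
Qed.
Definition allV : seq shrV := [seq (a, b) | a <- ordl 3, b <- ordl 3].
Lemma allVP (x : shrV) : x \in allV.
Proof. by case: x => a b; apply/allpairsP; exists (a, b); rewrite !ordlP. Qed.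

Section Check.
Variables (G : finZmodType) (sG : seq G) (k : nat) (g : 'I_k.+1 -> shrV -> G).
Definition allVV := [seq (u, v) | u <- allV, v <- allV].
Definition trips := [seq p <- [seq (j, q.1, q.2) | j <- ordl k, q <- allVV]
   | shrikhande p.1.2 p.2].
Definition pdiff (p : ('I_k.+1 * shrV * shrV)%type) := g p.1.1 p.2 - g p.1.1 p.1.2.
Definition diffs := map pdiff trips.
Definition check_aux (D : seq G) :=
  [&& uniq D, 0 \notin D & all (fun d => (d == 0) || (d \in D)) sG].
Definition check := all (fun j => uniq (map (g j) allV)) (ordl k) && check_aux diffs.

Arguments ordl : simpl never.
Arguments allV : simpl never.
Arguments allVV : simpl never.
Lemma tripsP p : (p \in trips) = shrikhande p.1.2 p.2.
Proof.
case: p => [[j u] v]; apply/idP/idP; rewrite mem_filter; first by case/andP.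
move=> h; rewrite h; apply/allpairsP; exists (j, (u, v)); split; first exact: ordlP.
  by apply/allpairsP; exists (u, v); rewrite !allVP.
by [].
Qed.

Lemma checkP : (forall x, x \in sG) -> check ->
  (forall j, injective (g j)) /\
  (forall d : G, d != 0 -> exists! p : ('I_k.+1 * shrV * shrV)%type,
      shrikhande p.1.2 p.2 && (g p.1.1 p.2 - g p.1.1 p.1.2 == d)).
Proof.
move=> hsG /andP [/allP hinj /and3P [hu h0 /allP hall]]; split.
  move=> j x y e; have := uniq_map_in (hinj j (ordlP j)).
  by move=> /(_ x y (allVP x) (allVP y) e).
move=> d d0.
have := hall d (hsG d); rewrite (negbTE d0) /= => /mapP [p hp ->].
exists p; split.
  by move: hp; rewrite tripsP => ->; rewrite eqxx.
move=> p' /andP [h1 /eqP h2].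
by apply: (uniq_map_in hu) => //; rewrite tripsP.
Qed.
End Check.


Lemma design_of (n k : nat) (G : finZmodType) (sG : seq G) (g : 'I_k.+1 -> shrV -> G) :
  #|G| = n -> (k.+1 * n = n * (n - 1) %/ 96)%N -> (forall x, x \in sG) ->
  check sG g -> shrikhande_design n.
Proof.
move=> hG hN hsG /(checkP hsG) [ginj gd].
have hI : #|{: ('I_k.+1 * G)%type}| = (n * (n - 1) %/ 96)%N.
  by rewrite card_prod card_ord hG.
have Finj : forall i : ('I_k.+1 * G)%type, injective (fun u => g i.1 u + i.2).
  by move=> i x y /addIr /ginj.
have [f [fi fd]] := transport hG hI Finj (diff_design ginj gd).
by exists f.
Qed.

Definition tab97 : seq (seq 'Z_97) := [:: map (mkord 96) [:: 0; 62; 34; 16; 96; 75; 73; 88; 37; 70; 26; 33; 6; 25; 2; 36]%N].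
Definition g97 (j : 'I_1) (u : shrV) : 'Z_97 := nth 0 (nth [::] tab97 j) (4 * u.1 + u.2)%N.
Lemma c97 : check (ordl 96) g97.
Proof. vm_compute. reflexivity. Qed.

Definition tab193 : seq (seq 'Z_193) := [:: map (mkord 192) [:: 0; 134; 116; 71; 190; 174; 1; 108; 176; 44; 94; 84; 141; 29; 120; 62]%N;
  map (mkord 192) [:: 0; 12; 130; 151; 138; 139; 141; 174; 144; 40; 112; 71; 96; 79; 74; 43]%N].
Definition g193 (j : 'I_2) (u : shrV) : 'Z_193 := nth 0 (nth [::] tab193 j) (4 * u.1 + u.2)%N.
Lemma c193 : check (ordl 192) g193.
Proof. vm_compute. reflexivity. Qed.

Definition G289 := ('Z_17 * 'Z_17)%type.
HB.instance Definition _ := GRing.Zmodule.on G289.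
HB.instance Definition _ := Finite.on G289.
Definition mk2 (p : nat * nat) : G289 := (mkord 16 p.1, mkord 16 p.2).
Definition all289 : seq G289 := [seq (a, b) | a <- ordl 16, b <- ordl 16].
Lemma all289P (x : G289) : x \in all289.
Proof. by case: x => a b; apply/allpairsP; exists (a, b); rewrite !ordlP. Qed.
Definition tab289 : seq (seq G289) := [::
  map mk2 [:: (0, 0); (14, 10); (9, 8); (0, 13); (1, 1); (10, 2); (12, 10); (2, 5); (7, 12); (0, 8); (1, 14); (3, 2); (7, 2); (14, 13); (3, 13); (2, 6)]%N;
  map mk2 [:: (0, 0); (16, 1); (12, 0); (8, 14); (3, 10); (12, 9); (6, 8); (0, 1); (11, 10); (1, 6); (11, 7); (11, 8); (14, 11); (10, 16); (6, 12); (15, 6)]%N;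
  map mk2 [:: (0, 0); (10, 0); (9, 9); (12, 8); (12, 14); (8, 3); (14, 2); (15, 5); (1, 3); (10, 1); (7, 5); (5, 10); (14, 6); (1, 11); (6, 5); (12, 3)]%N].
Definition g289 (j : 'I_3) (u : shrV) : G289 := nth 0 (nth [::] tab289 j) (4 * u.1 + u.2)%N.
Lemma c289 : check all289 g289.
Proof. vm_compute. reflexivity. Qed.

Local Close Scope ring_scope.
Theorem lemma2p3 (n : nat) : n \in [:: 97; 193; 289] -> shrikhande_design n.
Proof.
rewrite !inE => /or3P [] /eqP ->.
- apply: (@design_of 97 0 _ _ _ _ _ (@ordlP 96) c97) => //; by rewrite card_ord.
- apply: (@design_of 193 1 _ _ _ _ _ (@ordlP 192) c193) => //; by rewrite card_ord.
- apply: (@design_of 289 2 _ _ _ _ _ all289P c289) => //.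
  by rewrite card_prod !card_ord.
Qed.
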